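(* Let $A$ and $B$ be finite-dimensional local $k$-algebras, $X$ a finite-dimensional $(A,B)$-bimodule on which $k$ acts centrally, and $\Lambda=\begin{pmatrix}A&X\\0&B\end{pmatrix}$, $P_1=[A\ X]$, $P_2=[0\ B]$. (a) $\Sigma(\Lambda)$ contains $\operatorname{cone}\{(0,-1),(1,-r)\}$ for $r:=t(X)_B=\dim_{B/J_B}(X/XJ_B)$. (b) $\Sigma(\Lambda)$ contains $\operatorname{cone}\{(1,0),(\ell,-1)\}$ for $\ell:=t_A(X)=\dim_{A/J_A}(X/J_AX)$. (c) Let $g_1,\dots,g_r$ be a minimal set of generators of the right $B$-module $X$ and $g:=[g_1\ \cdots\ g_r]\in M_{1,r}(X)$. Then $\mu_1^+(\Lambda[1])=P_g\oplus P_2[1]$, a basic 2-term silting complex. (d) Let $h_1,\dots,h_\ell$ be a minimal set of generators of the left $A$-module $X$ and $h:=(h_1,\dots,h_\ell)^{T}\in M_{\ell,1}(X)$. Then $\mu_2^-(\Lambda)=P_1\oplus P_h$, a basic 2-term silting complex.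
   Context: $k$ a field; $t(X)_B$ (resp. $t_A(X)$) is the minimal number of generators of $X$ as right $B$- (resp. left $A$-) module. For $x\in M_{s,t}(X)$ ($s\times t$ matrices over $X$), $P_x$ is the 2-term complex $P_2^{\oplus t}\xrightarrow{x(\cdot)}P_1^{\oplus s}$ in degrees $-1,0$. $g$-fan $\Sigma(\Lambda)$: set of cones $\operatorname{cone}\{[T_i]\}$ for basic 2-term presilting complexes $T=\bigoplus T_i$ (presilting: $\operatorname{Hom}(T,T[\ell])=0$ for $\ell>0$; $[T]=[T^0]-[T^{-1}]$), in $\mathbb{R}^2$ via $[P_1]\mapsto(1,0)$, $[P_2]\mapsto(0,1)$. A 2-term presilting complex with two non-isomorphic indecomposable summands is silting. For basic 2-term silting complexes, $T\ge U$ iff $\operatorname{Hom}(T,U[\ell])=0$ for $\ell>0$. For basic 2-term silting $T=T_1\oplus T_2$ the mutation at $T_i$ is the unique other basic 2-term silting complex $T'_i\oplus T_j$ ($j\ne i$, $T'_i\not\cong T_i$), denoted $\mu_i^+(T)$ if it is $>T$ and $\mu_i^-(T)$ if $<T$. For $\Lambda[1]=P_1[1]\oplus P_2[1]$ and $\Lambda=P_1\oplus P_2$ the index $i$ refers to the summand $P_i[1]$, resp. $P_i$. *)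

(* Defs.v *)
From HB Require Import structures.
From mathcomp Require Import all_boot all_order all_algebra all_field.
From mathcomp Require Import reals.
Set Implicit Arguments. Unset Strict Implicit. Unset Printing Implicit Defensive.
Import Order.TTheory GRing.Theory Num.Theory.
Local Open Scope ring_scope.

(* A local ring: the non-units are closed under addition (hence form the
   unique maximal ideal); 1 <> 0 holds in any falgType. *)
Definition local_alg (A : unitRingType) : Prop :=
  forall a b : A, a \isn't a GRing.unit -> b \isn't a GRing.unit ->
    (a + b) \isn't a GRing.unit.

Section Model.
Variables (k : fieldType) (A B : falgType k) (X : vectType k).
Variables (la : A -> X -> X) (ra : X -> B -> X).

(* X is an (A,B)-bimodule, finite dimensional over k (vectType), on which
   k acts centrally: the k-actions induced by A, by B and by the k-vector
   space structure all agree and commute with everything. *)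
Definition bimodule : Prop :=
  (forall x, la 1 x = x) /\
      (forall a a' x, la (a * a') x = la a (la a' x)) /\
      (forall a a' x, la (a + a') x = la a x + la a' x) /\
      (forall a x y, la a (x + y) = la a x + la a y) /\
      (forall (c : k) a x, la (c *: a) x = c *: la a x) /\
      (forall (c : k) a x, la a (c *: x) = c *: la a x) /\
      (forall x, ra x 1 = x) /\
      (forall x b b', ra x (b * b') = ra (ra x b) b') /\
      (forall x b b', ra x (b + b') = ra x b + ra x b') /\
      (forall x y b, ra (x + y) b = ra x b + ra y b) /\
      (forall (c : k) x b, ra x (c *: b) = c *: ra x b) /\
      (forall (c : k) x b, ra (c *: x) b = c *: ra x b) /\
      (forall a x b, ra (la a x) b = la a (ra x b)).

Definition gens_right r (g : 'M[X]_(1, r)) : Prop :=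
  forall x : X, exists b : 'I_r -> B, x = \sum_(i < r) ra (g ord0 i) (b i).
Definition gens_left l (h : 'M[X]_(l, 1)) : Prop :=
  forall x : X, exists a : 'I_l -> A, x = \sum_(i < l) la (a i) (h i ord0).

Definition is_tB (r : nat) : Prop :=
  (exists g : 'M[X]_(1, r), gens_right g) /\
  forall n (g : 'M[X]_(1, n)), gens_right g -> (r <= n)%N.
Definition is_tA (l : nat) : Prop :=
  (exists h : 'M[X]_(l, 1), gens_left h) /\
  forall n (h : 'M[X]_(n, 1)), gens_left h -> (l <= n)%N.

(* Morphisms P1^p (+) P2^q -> P1^p' (+) P2^q'.
   Hom(P1,P1) = A, Hom(P2,P1) = X, Hom(P1,P2) = 0, Hom(P2,P2) = B,
   acting by left multiplication; composition is multiplication in Lambda. *)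
Record hom (p q p' q' : nat) := Hom {
  hA : 'M[A]_(p', p); hX : 'M[X]_(p', q); hB : 'M[B]_(q', q) }.

Definition mxAX m n p (M : 'M[A]_(m, n)) (N : 'M[X]_(n, p)) : 'M[X]_(m, p) :=
  \matrix_(i, j) \sum_(l < n) la (M i l) (N l j).
Definition mxXB m n p (M : 'M[X]_(m, n)) (N : 'M[B]_(n, p)) : 'M[X]_(m, p) :=
  \matrix_(i, j) \sum_(l < n) ra (M i l) (N l j).

Definition hcomp p q p' q' p'' q'' (g : hom p' q' p'' q'') (f : hom p q p' q')
  : hom p q p'' q'' :=
  Hom (hA g *m hA f) (mxAX (hA g) (hX f) + mxXB (hX g) (hB f)) (hB g *m hB f).
Definition hadd p q p' q' (f g : hom p q p' q') : hom p q p' q' :=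
  Hom (hA f + hA g) (hX f + hX g) (hB f + hB g).
Definition hsub p q p' q' (f g : hom p q p' q') : hom p q p' q' :=
  Hom (hA f - hA g) (hX f - hX g) (hB f - hB g).
Definition hid p q : hom p q p q := Hom 1%:M 0 1%:M.

(* 2-term complex T^{-1} = P1^n1 (+) P2^n2 --d--> T^0 = P1^m1 (+) P2^m2 *)
Record cplx := Cplx { n1 : nat; n2 : nat; m1 : nat; m2 : nat;
                      dif : hom n1 n2 m1 m2 }.

Definition zero_cplx : cplx := @Cplx 0 0 0 0 (Hom 0 0 0).

Definition dsum (T U : cplx) : cplx :=
  @Cplx (n1 T + n1 U) (n2 T + n2 U) (m1 T + m1 U) (m2 T + m2 U)
    (Hom (block_mx (hA (dif T)) 0 0 (hA (dif U)))
         (block_mx (hX (dif T)) 0 0 (hX (dif U)))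
         (block_mx (hB (dif T)) 0 0 (hB (dif U)))).

Definition big_dsum (s : seq cplx) : cplx := foldr dsum zero_cplx s.

Definition chain_map (T U : cplx) (f1 : hom (n1 T) (n2 T) (n1 U) (n2 U))
  (f0 : hom (m1 T) (m2 T) (m1 U) (m2 U)) : Prop :=
  hcomp (dif U) f1 = hcomp f0 (dif T).

Definition null_htpc (T U : cplx) (f1 : hom (n1 T) (n2 T) (n1 U) (n2 U))
  (f0 : hom (m1 T) (m2 T) (m1 U) (m2 U)) : Prop :=
  exists h : hom (m1 T) (m2 T) (n1 U) (n2 U),
    f1 = hcomp h (dif T) /\ f0 = hcomp (dif U) h.

Definition iso (T U : cplx) : Prop :=
  exists f1 f0 g1 g0, chain_map f1 f0 /\ chain_map (T := U) (U := T) g1 g0 /\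
    null_htpc (hsub (hcomp g1 f1) (hid _ _)) (hsub (hcomp g0 f0) (hid _ _)) /\
    null_htpc (hsub (hcomp f1 g1) (hid _ _)) (hsub (hcomp f0 g0) (hid _ _)).

Definition indec (T : cplx) : Prop :=
  ~ iso T zero_cplx /\
  forall T' T'', iso T (dsum T' T'') -> iso T' zero_cplx \/ iso T'' zero_cplx.

(* Hom(T, U[1]) = 0 in the homotopy category; Hom(T, U[l]) = 0 for l >= 2
   holds automatically for 2-term complexes. *)
Definition hom_shift_vanish (T U : cplx) : Prop :=
  forall phi : hom (n1 T) (n2 T) (m1 U) (m2 U),
    exists (h0 : hom (m1 T) (m2 T) (m1 U) (m2 U))
           (h1 : hom (n1 T) (n2 T) (n1 U) (n2 U)),
      phi = hadd (hcomp h0 (dif T)) (hcomp (dif U) h1).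

Definition presilting (T : cplx) : Prop := hom_shift_vanish T T.

(* basic 2-term silting complex T1 (+) T2 with two non-isomorphic
   indecomposable summands (presilting with 2 summands = silting) *)
Definition basic_silting2 (T1 T2 : cplx) : Prop :=
  [/\ indec T1, indec T2, ~ iso T1 T2 & presilting (dsum T1 T2)].

Definition silt_geq (T U : cplx) : Prop := hom_shift_vanish T U.
Definition silt_gt (T U : cplx) : Prop := silt_geq T U /\ ~ iso T U.

Definition mutation_at (i : nat) (T1 T2 U1 U2 : cplx) : Prop :=
  basic_silting2 U1 U2 /\
  (if i == 1%N then U2 = T2 /\ ~ iso U1 T1 else U1 = T1 /\ ~ iso U2 T2).
Definition mu_plus i T1 T2 U1 U2 : Prop :=
  mutation_at i T1 T2 U1 U2 /\ silt_gt (dsum U1 U2) (dsum T1 T2).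
Definition mu_minus i T1 T2 U1 U2 : Prop :=
  mutation_at i T1 T2 U1 U2 /\ silt_gt (dsum T1 T2) (dsum U1 U2).

Definition P1c : cplx := @Cplx 0 0 1 0 (Hom 0 0 0).
Definition P2c : cplx := @Cplx 0 0 0 1 (Hom 0 0 0).
Definition P1sh : cplx := @Cplx 1 0 0 0 (Hom 0 0 0).
Definition P2sh : cplx := @Cplx 0 1 0 0 (Hom 0 0 0).
Definition Px s t (x : 'M[X]_(s, t)) : cplx := @Cplx 0 t s 0 (Hom 0 x 0).

Variable R : realType.
Definition gvec (T : cplx) : R * R :=
  ((m1 T)%:R - (n1 T)%:R, (m2 T)%:R - (n2 T)%:R).

End Model.

Definition cone (R : realType) (vs : seq (R * R)) : R * R -> Prop :=
  fun p => exists lam : 'I_(size vs) -> R, (forall i, 0 <= lam i) /\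
    p = (\sum_(i < size vs) lam i * (nth (0, 0) vs i).1,
         \sum_(i < size vs) lam i * (nth (0, 0) vs i).2).

Definition gfan_contains (R : realType) (k : fieldType) (A B : falgType k)
  (X : vectType k) (la : A -> X -> X) (ra : X -> B -> X)
  (C : R * R -> Prop) : Prop :=
  exists s : seq (cplx A B X),
    (forall i : 'I_(size s), indec la ra (nth (zero_cplx A B X) s i)) /\
    (forall i j : 'I_(size s), i != j ->
       ~ iso la ra (nth (zero_cplx A B X) s i) (nth (zero_cplx A B X) s j)) /\
    presilting la ra (big_dsum s) /\
    (forall p, C p <-> cone (map (gvec R) s) p).

(* Main.v *)
Require Import Defs.
From HB Require Import structures.
From mathcomp Require Import all_boot all_order all_algebra all_field.
From mathcomp Require Import reals.
Set Warnings "-notation-overridden,-ambiguous-paths".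
Set Implicit Arguments. Unset Strict Implicit. Unset Printing Implicit Defensive.
Import Order.TTheory GRing.Theory Num.Theory.
Local Open Scope ring_scope.

Section Alg.
Variables (k : fieldType) (A B : falgType k) (X : vectType k).
Variables (la : A -> X -> X) (ra : X -> B -> X).
Hypothesis Hb : bimodule la ra.


Ltac bim := move: Hb => [h1 [h2 [h3 [h4 [h5 [h6 [h7 [h8 [h9 [h10 [h11 [h12 h13]]]]]]]]]]]].
Lemma la1 x : la 1 x = x. Proof. by bim. Qed.
Lemma laM a a' x : la (a * a') x = la a (la a' x). Proof. by bim. Qed.
Lemma laDl a a' x : la (a + a') x = la a x + la a' x. Proof. by bim. Qed.
Lemma laDr a x y : la a (x + y) = la a x + la a y. Proof. by bim. Qed.
Lemma ra1 x : ra x 1 = x. Proof. by bim. Qed.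
Lemma raM x b b' : ra x (b * b') = ra (ra x b) b'. Proof. by bim. Qed.
Lemma raDr x b b' : ra x (b + b') = ra x b + ra x b'. Proof. by bim. Qed.
Lemma raDl x y b : ra (x + y) b = ra x b + ra y b. Proof. by bim. Qed.
Lemma raA a x b : ra (la a x) b = la a (ra x b). Proof. by bim. Qed.

Lemma la0r a : la a 0 = 0.
Proof. by apply: (addrI (la a 0)); rewrite -laDr !addr0. Qed.
Lemma la0l x : la 0 x = 0.
Proof. by apply: (addrI (la 0 x)); rewrite -laDl !addr0. Qed.
Lemma ra0l b : ra 0 b = 0.
Proof. by apply: (addrI (ra 0 b)); rewrite -raDl !addr0. Qed.
Lemma ra0r x : ra x 0 = 0.
Proof. by apply: (addrI (ra x 0)); rewrite -raDr !addr0. Qed.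
Lemma laNr a x : la a (- x) = - la a x.
Proof. by apply/eqP; rewrite -subr_eq0 opprK -laDr addNr la0r. Qed.
Lemma laNl a x : la (- a) x = - la a x.
Proof. by apply/eqP; rewrite -subr_eq0 opprK -laDl addNr la0l. Qed.
Lemma raNl x b : ra (- x) b = - ra x b.
Proof. by apply/eqP; rewrite -subr_eq0 opprK -raDl addNr ra0l. Qed.
Lemma raNr x b : ra x (- b) = - ra x b.
Proof. by apply/eqP; rewrite -subr_eq0 opprK -raDr addNr ra0r. Qed.
Lemma la_sumr a I (r : seq I) (P : pred I) F :
  la a (\sum_(i <- r | P i) F i) = \sum_(i <- r | P i) la a (F i).
Proof. exact: (big_morph _ (laDr a) (la0r a)). Qed.
Lemma la_suml x I (r : seq I) (P : pred I) F :
  la (\sum_(i <- r | P i) F i) x = \sum_(i <- r | P i) la (F i) x.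
Proof. exact: (big_morph (fun a => la a x) (fun a b => laDl a b x) (la0l x)). Qed.
Lemma ra_suml b I (r : seq I) (P : pred I) F :
  ra (\sum_(i <- r | P i) F i) b = \sum_(i <- r | P i) ra (F i) b.
Proof. exact: (big_morph (fun x => ra x b) (fun x y => raDl x y b) (ra0l b)). Qed.
Lemma ra_sumr x I (r : seq I) (P : pred I) F :
  ra x (\sum_(i <- r | P i) F i) = \sum_(i <- r | P i) ra x (F i).
Proof. exact: (big_morph _ (raDr x) (ra0r x)). Qed.

Notation AX := (mxAX la).
Notation XB := (mxXB ra).

Lemma AX_addl m n p (M M' : 'M[A]_(m, n)) (N : 'M[X]_(n, p)) :
  AX (M + M') N = AX M N + AX M' N.
Proof. by apply/matrixP => i j; rewrite !mxE -big_split; apply: eq_bigr => l _; rewrite mxE laDl. Qed.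
Lemma AX_addr m n p (M : 'M[A]_(m, n)) (N N' : 'M[X]_(n, p)) :
  AX M (N + N') = AX M N + AX M N'.
Proof. by apply/matrixP => i j; rewrite !mxE -big_split; apply: eq_bigr => l _; rewrite mxE laDr. Qed.
Lemma AX_oppl m n p (M : 'M[A]_(m, n)) (N : 'M[X]_(n, p)) : AX (- M) N = - AX M N.
Proof. by apply/matrixP => i j; rewrite !mxE -sumrN; apply: eq_bigr => l _; rewrite mxE laNl. Qed.
Lemma AX_oppr m n p (M : 'M[A]_(m, n)) (N : 'M[X]_(n, p)) : AX M (- N) = - AX M N.
Proof. by apply/matrixP => i j; rewrite !mxE -sumrN; apply: eq_bigr => l _; rewrite mxE laNr. Qed.
Lemma AX_subl m n p (M M' : 'M[A]_(m, n)) (N : 'M[X]_(n, p)) :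
  AX (M - M') N = AX M N - AX M' N.
Proof. by rewrite AX_addl AX_oppl. Qed.
Lemma AX_subr m n p (M : 'M[A]_(m, n)) (N N' : 'M[X]_(n, p)) :
  AX M (N - N') = AX M N - AX M N'.
Proof. by rewrite AX_addr AX_oppr. Qed.
Lemma AX0l m n p (N : 'M[X]_(n, p)) : AX (0 : 'M_(m, n)) N = 0.
Proof. by apply/matrixP => i j; rewrite !mxE big1 // => l _; rewrite mxE la0l. Qed.
Lemma AX0r m n p (M : 'M[A]_(m, n)) : AX M (0 : 'M_(n, p)) = 0.
Proof. by apply/matrixP => i j; rewrite !mxE big1 // => l _; rewrite mxE la0r. Qed.
Lemma AX1 n p (N : 'M[X]_(n, p)) : AX 1%:M N = N.
Proof.
apply/matrixP => i j; rewrite !mxE (bigD1 i) //= big1 ?addr0; first by rewrite mxE eqxx la1.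
by move=> l /negbTE; rewrite mxE eq_sym => ->; rewrite la0l.
Qed.
Lemma AX_mul m n p q (M : 'M[A]_(m, n)) (M' : 'M[A]_(n, p)) (N : 'M[X]_(p, q)) :
  AX (M *m M') N = AX M (AX M' N).
Proof.
apply/matrixP => i j; rewrite !mxE.
under eq_bigr do rewrite mxE la_suml.
rewrite exchange_big /=; apply: eq_bigr => l _; rewrite mxE la_sumr.
by apply: eq_bigr => t _; rewrite laM.
Qed.

Lemma XB_addl m n p (M M' : 'M[X]_(m, n)) (N : 'M[B]_(n, p)) :
  XB (M + M') N = XB M N + XB M' N.
Proof. by apply/matrixP => i j; rewrite !mxE -big_split; apply: eq_bigr => l _; rewrite mxE raDl. Qed.
Lemma XB_addr m n p (M : 'M[X]_(m, n)) (N N' : 'M[B]_(n, p)) :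
  XB M (N + N') = XB M N + XB M N'.
Proof. by apply/matrixP => i j; rewrite !mxE -big_split; apply: eq_bigr => l _; rewrite mxE raDr. Qed.
Lemma XB_oppl m n p (M : 'M[X]_(m, n)) (N : 'M[B]_(n, p)) : XB (- M) N = - XB M N.
Proof. by apply/matrixP => i j; rewrite !mxE -sumrN; apply: eq_bigr => l _; rewrite mxE raNl. Qed.
Lemma XB_oppr m n p (M : 'M[X]_(m, n)) (N : 'M[B]_(n, p)) : XB M (- N) = - XB M N.
Proof. by apply/matrixP => i j; rewrite !mxE -sumrN; apply: eq_bigr => l _; rewrite mxE raNr. Qed.
Lemma XB_subl m n p (M M' : 'M[X]_(m, n)) (N : 'M[B]_(n, p)) :
  XB (M - M') N = XB M N - XB M' N.
Proof. by rewrite XB_addl XB_oppl. Qed.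
Lemma XB_subr m n p (M : 'M[X]_(m, n)) (N N' : 'M[B]_(n, p)) :
  XB M (N - N') = XB M N - XB M N'.
Proof. by rewrite XB_addr XB_oppr. Qed.
Lemma XB0l m n p (N : 'M[B]_(n, p)) : XB (0 : 'M_(m, n)) N = 0.
Proof. by apply/matrixP => i j; rewrite !mxE big1 // => l _; rewrite mxE ra0l. Qed.
Lemma XB0r m n p (M : 'M[X]_(m, n)) : XB M (0 : 'M_(n, p)) = 0.
Proof. by apply/matrixP => i j; rewrite !mxE big1 // => l _; rewrite mxE ra0r. Qed.
Lemma XB1 m n (N : 'M[X]_(m, n)) : XB N 1%:M = N.
Proof.
apply/matrixP => i j; rewrite !mxE (bigD1 j) //= big1 ?addr0; first by rewrite mxE eqxx ra1.
by move=> l /negbTE; rewrite mxE => ->; rewrite ra0r.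
Qed.
Lemma XB_mul m n p q (N : 'M[X]_(m, n)) (M : 'M[B]_(n, p)) (M' : 'M[B]_(p, q)) :
  XB N (M *m M') = XB (XB N M) M'.
Proof.
apply/matrixP => i j; rewrite !mxE.
under eq_bigr do rewrite mxE ra_sumr.
rewrite exchange_big /=; apply: eq_bigr => l _; rewrite mxE ra_suml.
by apply: eq_bigr => t _; rewrite raM.
Qed.
Lemma AXB m n p q (M : 'M[A]_(m, n)) (N : 'M[X]_(n, p)) (P : 'M[B]_(p, q)) :
  AX M (XB N P) = XB (AX M N) P.
Proof.
apply/matrixP => i j; rewrite !mxE.
under eq_bigr do rewrite mxE la_sumr.
rewrite exchange_big /=; apply: eq_bigr => l _; rewrite mxE ra_suml.
by apply: eq_bigr => t _; rewrite raA.
Qed.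
Lemma AX_thin m p (M : 'M[A]_(m, 0)) (N : 'M[X]_(0, p)) : AX M N = 0.
Proof. by apply/matrixP => i j; rewrite !mxE big_ord0. Qed.
Lemma XB_thin m p (M : 'M[X]_(m, 0)) (N : 'M[B]_(0, p)) : XB M N = 0.
Proof. by apply/matrixP => i j; rewrite !mxE big_ord0. Qed.
Ltac blk := rewrite ?block_mxEul ?block_mxEur ?block_mxEdl ?block_mxEdr.
Lemma AX_block m1 m2 n1 n2 p1 p2 (a1 : 'M[A]_(m1, n1)) (a2 : 'M[A]_(m1, n2))
  (a3 : 'M[A]_(m2, n1)) (a4 : 'M[A]_(m2, n2))
  (y1 : 'M[X]_(n1, p1)) (y2 : 'M[X]_(n1, p2)) (y3 : 'M[X]_(n2, p1)) (y4 : 'M[X]_(n2, p2)) :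
  AX (block_mx a1 a2 a3 a4) (block_mx y1 y2 y3 y4) =
  block_mx (AX a1 y1 + AX a2 y3) (AX a1 y2 + AX a2 y4)
           (AX a3 y1 + AX a4 y3) (AX a3 y2 + AX a4 y4).
Proof.
apply/matrixP => i j; rewrite -(splitK i) -(splitK j).
case: (split i) => i'; case: (split j) => j'.
all: rewrite [LHS]mxE big_split_ord /=; under eq_bigr do blk; under [X in _ + X]eq_bigr do blk.
all: by blk; rewrite !mxE.
Qed.
Lemma XB_block m1 m2 n1 n2 p1 p2 (a1 : 'M[X]_(m1, n1)) (a2 : 'M[X]_(m1, n2))
  (a3 : 'M[X]_(m2, n1)) (a4 : 'M[X]_(m2, n2))
  (y1 : 'M[B]_(n1, p1)) (y2 : 'M[B]_(n1, p2)) (y3 : 'M[B]_(n2, p1)) (y4 : 'M[B]_(n2, p2)) :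
  XB (block_mx a1 a2 a3 a4) (block_mx y1 y2 y3 y4) =
  block_mx (XB a1 y1 + XB a2 y3) (XB a1 y2 + XB a2 y4)
           (XB a3 y1 + XB a4 y3) (XB a3 y2 + XB a4 y4).
Proof.
apply/matrixP => i j; rewrite -(splitK i) -(splitK j).
case: (split i) => i'; case: (split j) => j'.
all: rewrite [LHS]mxE big_split_ord /=; under eq_bigr do blk; under [X in _ + X]eq_bigr do blk.
all: by blk; rewrite !mxE.
Qed.

Notation hom := (Defs.hom A B X).
Notation hc := (hcomp la ra).

Lemma hom_eq p q p' q' (f g : hom p q p' q') :
  hA f = hA g -> hX f = hX g -> hB f = hB g -> f = g.
Proof. by case: f => ? ? ?; case: g => ? ? ? /= -> -> ->. Qed.

Definition hzero p q p' q' : hom p q p' q' := Defs.Hom 0 0 0.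
Arguments hzero {p q p' q'}.

Lemma hcA p q p1 q1 p2 q2 p3 q3 (h : hom p2 q2 p3 q3) (g : hom p1 q1 p2 q2)
  (f : hom p q p1 q1) : hc h (hc g f) = hc (hc h g) f.
Proof.
apply: hom_eq; rewrite /= ?mulmxA //.
by rewrite AX_addr XB_addl AX_mul XB_mul AXB addrA.
Qed.
Lemma hc1f p q p' q' (f : hom p q p' q') : hc (hid A B X p' q') f = f.
Proof. by apply: hom_eq; rewrite /= ?mul1mx // AX1 XB0l addr0. Qed.
Lemma hcf1 p q p' q' (f : hom p q p' q') : hc f (hid A B X p q) = f.
Proof. by apply: hom_eq; rewrite /= ?mulmx1 // AX0r XB1 add0r. Qed.
Lemma hc0f p q p1 q1 p2 q2 (f : hom p q p1 q1) : hc (@hzero p1 q1 p2 q2) f = hzero.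
Proof. by apply: hom_eq; rewrite /= ?mul0mx // AX0l XB0l addr0. Qed.
Lemma hcf0 p q p1 q1 p2 q2 (f : hom p1 q1 p2 q2) : hc f (@hzero p q p1 q1) = hzero.
Proof. by apply: hom_eq; rewrite /= ?mulmx0 // AX0r XB0r addr0. Qed.
Lemma hc_addl p q p1 q1 p2 q2 (g g' : hom p1 q1 p2 q2) (f : hom p q p1 q1) :
  hc (hadd g g') f = hadd (hc g f) (hc g' f).
Proof. by apply: hom_eq; rewrite /= ?mulmxDl // AX_addl XB_addl addrACA. Qed.
Lemma hc_addr p q p1 q1 p2 q2 (g : hom p1 q1 p2 q2) (f f' : hom p q p1 q1) :
  hc g (hadd f f') = hadd (hc g f) (hc g f').
Proof. by apply: hom_eq; rewrite /= ?mulmxDr // AX_addr XB_addr addrACA. Qed.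
Lemma hc_subl p q p1 q1 p2 q2 (g g' : hom p1 q1 p2 q2) (f : hom p q p1 q1) :
  hc (hsub g g') f = hsub (hc g f) (hc g' f).
Proof. by apply: hom_eq; rewrite /= ?mulmxBl // AX_subl XB_subl opprD addrACA. Qed.
Lemma hc_subr p q p1 q1 p2 q2 (g : hom p1 q1 p2 q2) (f f' : hom p q p1 q1) :
  hc g (hsub f f') = hsub (hc g f) (hc g f').
Proof. by apply: hom_eq; rewrite /= ?mulmxBr // AX_subr XB_subr opprD addrACA. Qed.
Lemma hsubxx p q p' q' (f : hom p q p' q') : hsub f f = hzero.
Proof. by apply: hom_eq; rewrite /= subrr. Qed.
Lemma hsub0 p q p' q' (f : hom p q p' q') : hsub f hzero = f.
Proof. by apply: hom_eq; rewrite /= subr0. Qed.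

Notation cplx := (Defs.cplx A B X).
Definition cm (T U : cplx) :=
  (hom (n1 T) (n2 T) (n1 U) (n2 U) * hom (m1 T) (m2 T) (m1 U) (m2 U))%type.
Definition cc (T U V : cplx) (G : cm U V) (F : cm T U) : cm T V :=
  (hc G.1 F.1, hc G.2 F.2).
Definition cadd (T U : cplx) (F G : cm T U) : cm T U := (hadd F.1 G.1, hadd F.2 G.2).
Definition csub (T U : cplx) (F G : cm T U) : cm T U := (hsub F.1 G.1, hsub F.2 G.2).
Definition cid (T : cplx) : cm T T := (hid A B X _ _, hid A B X _ _).
Definition cz (T U : cplx) : cm T U := (hzero, hzero).
Definition ischain (T U : cplx) (F : cm T U) := chain_map la ra F.1 F.2.
Definition NH (T U : cplx) (F : cm T U) := null_htpc la ra F.1 F.2.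
Arguments cid {T}. Arguments cz {T U}.

Lemma ccA T U V W (H : cm V W) (G : cm U V) (F : cm T U) : cc H (cc G F) = cc (cc H G) F.
Proof. by rewrite /cc /= !hcA. Qed.
Lemma cc1F T U (F : cm T U) : cc cid F = F.
Proof. by case: F => ? ?; rewrite /cc /= !hc1f. Qed.
Lemma ccF1 T U (F : cm T U) : cc F cid = F.
Proof. by case: F => ? ?; rewrite /cc /= !hcf1. Qed.
Lemma cc0F T U V (F : cm T U) : cc (@cz U V) F = cz.
Proof. by rewrite /cc /= !hc0f. Qed.
Lemma ccF0 T U V (F : cm U V) : cc F (@cz T U) = cz.
Proof. by rewrite /cc /= !hcf0. Qed.
Lemma cc_subl T U V (G G' : cm U V) (F : cm T U) : cc (csub G G') F = csub (cc G F) (cc G' F).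
Proof. by rewrite /cc /= !hc_subl. Qed.
Lemma cc_subr T U V (G : cm U V) (F F' : cm T U) : cc G (csub F F') = csub (cc G F) (cc G F').
Proof. by rewrite /cc /= !hc_subr. Qed.
Lemma csubxx T U (F : cm T U) : csub F F = cz.
Proof. by rewrite /csub !hsubxx. Qed.
Lemma csub0 T U (F : cm T U) : csub F cz = F.
Proof. by case: F => ? ?; rewrite /csub !hsub0. Qed.

Lemma ischain_cc T U V (G : cm U V) (F : cm T U) :
  ischain G -> ischain F -> ischain (cc G F).
Proof. by rewrite /ischain /chain_map /= => eG eF; rewrite hcA eG -hcA eF hcA. Qed.
Lemma ischain_id T : ischain (@cid T).
Proof. by rewrite /ischain /chain_map /= hc1f hcf1. Qed.
Lemma ischain_sub T U (F G : cm T U) : ischain F -> ischain G -> ischain (csub F G).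
Proof. by rewrite /ischain /chain_map /= => eF eG; rewrite hc_subr hc_subl eF eG. Qed.
Lemma ischain0 T U : ischain (@cz T U).
Proof. by rewrite /ischain /chain_map /= hc0f hcf0. Qed.

Lemma NH0 T U : NH (@cz T U).
Proof. by exists hzero; rewrite hc0f hcf0. Qed.
Lemma NH_sub T U (F G : cm T U) : NH F -> NH G -> NH (csub F G).
Proof.
move=> [h [e1 e0]] [h' [e1' e0']]; exists (hsub h h').
by rewrite /= e1 e0 e1' e0' hc_subl hc_subr.
Qed.
Lemma NH_opp T U (F : cm T U) : NH F -> NH (csub cz F).
Proof. by move=> NF; apply: NH_sub => //; apply: NH0. Qed.
Lemma NH_compl T U V (G : cm U V) (F : cm T U) : ischain G -> NH F -> NH (cc G F).
Proof.
rewrite /ischain /chain_map => eG [h [e1 e0]]; exists (hc G.1 h).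
by split; rewrite /cc /= ?e1 ?e0 !hcA // -eG.
Qed.
Lemma NH_compr T U V (G : cm U V) (F : cm T U) : ischain F -> NH G -> NH (cc G F).
Proof.
rewrite /ischain /chain_map => eF [h [e1 e0]]; exists (hc h F.2).
by split; rewrite /cc /= ?e1 ?e0 -!hcA // eF.
Qed.

Definition htp T U (F G : cm T U) := NH (csub F G).
Lemma csub_trans T U (F G H : cm T U) : csub F H = csub (csub F G) (csub cz (csub G H)).
Proof. by rewrite /csub /=; congr pair; apply: hom_eq => /=; rewrite !sub0r !opprB addrA subrK. Qed.
Lemma htp_refl T U (F : cm T U) : htp F F.
Proof. by rewrite /htp csubxx; apply: NH0. Qed.
Lemma htp_trans T U (F G H : cm T U) : htp F G -> htp G H -> htp F H.
Proof. by rewrite /htp => h1 h2; rewrite (csub_trans F G H); apply: NH_sub h1 (NH_opp h2). Qed.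
Lemma htp_sym T U (F G : cm T U) : htp F G -> htp G F.
Proof.
rewrite /htp => /NH_opp; congr NH; rewrite /csub /=; congr pair; apply: hom_eq => /=;
  by rewrite sub0r opprB.
Qed.
Lemma htp_compl T U V (G : cm U V) (F F' : cm T U) : ischain G -> htp F F' -> htp (cc G F) (cc G F').
Proof. by rewrite /htp -cc_subr; apply: NH_compl. Qed.
Lemma htp_compr T U V (G G' : cm U V) (F : cm T U) : ischain F -> htp G G' -> htp (cc G F) (cc G' F).
Proof. by rewrite /htp -cc_subl; apply: NH_compr. Qed.
Lemma htp_sub T U (F F' G G' : cm T U) : htp F F' -> htp G G' -> htp (csub F G) (csub F' G').
Proof.
rewrite /htp => h1 h2; have := NH_sub h1 h2; congr NH; rewrite /csub /=; congr pair;
  apply: hom_eq => /=; by rewrite !opprD !opprK addrACA.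
Qed.

Definition hdiag p1 q1 p1' q1' p2 q2 p2' q2' (d1 : hom p1 q1 p1' q1')
  (d2 : hom p2 q2 p2' q2') : hom (p1 + p2) (q1 + q2) (p1' + p2') (q1' + q2') :=
  Defs.Hom (block_mx (hA d1) 0 0 (hA d2)) (block_mx (hX d1) 0 0 (hX d2))
           (block_mx (hB d1) 0 0 (hB d2)).
Definition hul p1 p2 q1 q2 p1' p2' q1' q2'
  (f : hom (p1 + p2) (q1 + q2) (p1' + p2') (q1' + q2')) : hom p1 q1 p1' q1' :=
  Defs.Hom (ulsubmx (hA f)) (ulsubmx (hX f)) (ulsubmx (hB f)).
Definition hdr p1 p2 q1 q2 p1' p2' q1' q2'
  (f : hom (p1 + p2) (q1 + q2) (p1' + p2') (q1' + q2')) : hom p2 q2 p2' q2' :=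
  Defs.Hom (drsubmx (hA f)) (drsubmx (hX f)) (drsubmx (hB f)).

Arguments hul {p1 p2 q1 q2 p1' p2' q1' q2'} f.
Arguments hdr {p1 p2 q1 q2 p1' p2' q1' q2'} f.
Ltac blsimp := rewrite ?mulmx_block ?AX_block ?XB_block ?add_block_mx
  ?block_mxKul ?block_mxKdr ?mulmx0 ?mul0mx ?AX0r ?AX0l ?XB0r ?XB0l ?addr0 ?add0r.

Lemma hul_r p1 p2 q1 q2 a1 a2 b1 b2 c1 c2 d1 d2
  (g : hom (a1 + a2) (b1 + b2) (c1 + c2) (d1 + d2))
  (x : hom p1 q1 a1 b1) (y : hom p2 q2 a2 b2) :
  hul (hc g (hdiag x y)) = hc (hul g) x.
Proof.
case: g => gA gX gB; rewrite -[gA]submxK -[gX]submxK -[gB]submxK.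
by apply: hom_eq; rewrite /= ?block_mxKul; blsimp.
Qed.
Lemma hul_l p1 p2 q1 q2 a1 a2 b1 b2 c1 c2 d1 d2
  (g : hom (a1 + a2) (b1 + b2) (c1 + c2) (d1 + d2))
  (x : hom c1 d1 p1 q1) (y : hom c2 d2 p2 q2) :
  hul (hc (hdiag x y) g) = hc x (hul g).
Proof.
case: g => gA gX gB; rewrite -[gA]submxK -[gX]submxK -[gB]submxK.
by apply: hom_eq; rewrite /= ?block_mxKul; blsimp.
Qed.
Lemma hdr_r p1 p2 q1 q2 a1 a2 b1 b2 c1 c2 d1 d2
  (g : hom (a1 + a2) (b1 + b2) (c1 + c2) (d1 + d2))
  (x : hom p1 q1 a1 b1) (y : hom p2 q2 a2 b2) :
  hdr (hc g (hdiag x y)) = hc (hdr g) y.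
Proof.
case: g => gA gX gB; rewrite -[gA]submxK -[gX]submxK -[gB]submxK.
by apply: hom_eq; rewrite /= ?block_mxKdr; blsimp.
Qed.
Lemma hdr_l p1 p2 q1 q2 a1 a2 b1 b2 c1 c2 d1 d2
  (g : hom (a1 + a2) (b1 + b2) (c1 + c2) (d1 + d2))
  (x : hom c1 d1 p1 q1) (y : hom c2 d2 p2 q2) :
  hdr (hc (hdiag x y) g) = hc y (hdr g).
Proof.
case: g => gA gX gB; rewrite -[gA]submxK -[gX]submxK -[gB]submxK.
by apply: hom_eq; rewrite /= ?block_mxKdr; blsimp.
Qed.

Lemma dif_dsum (T U : cplx) : dif (dsum T U) = hdiag (dif T) (dif U).
Proof. by []. Qed.

Definition E1 (T U : cplx) : cm (dsum T U) (dsum T U) :=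
  (Defs.Hom (block_mx 1%:M 0 0 0) 0 (block_mx 1%:M 0 0 0),
   Defs.Hom (block_mx 1%:M 0 0 0) 0 (block_mx 1%:M 0 0 0)).

Lemma E1_chain T U : ischain (E1 T U).
Proof.
rewrite /ischain /chain_map dif_dsum; apply: hom_eq; rewrite /=;
  by blsimp; rewrite ?mulmx1 ?mul1mx ?AX1 ?XB1 ?XB0r ?AX0r ?AX0l ?XB0l ?addr0 ?add0r.
Qed.
Lemma E1_idem T U : cc (E1 T U) (E1 T U) = E1 T U.
Proof.
rewrite /cc /=; congr pair; apply: hom_eq; rewrite /=;
  by blsimp; rewrite ?mulmx1 ?mul1mx ?AX0r ?XB0l ?addr0.
Qed.

Lemma htp_mid T U V W (L : cm V W) (M M' : cm U V) (R : cm T U) :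
  ischain L -> ischain R -> htp M M' -> htp (cc L (cc M R)) (cc L (cc M' R)).
Proof. by move=> cL cR h; apply: htp_compl => //; apply: htp_compr. Qed.

Lemma key_idem T S (F : cm T S) (G : cm S T) (E : cm S S) :
  ischain F -> ischain G -> ischain E -> htp (cc F G) cid -> cc E E = E ->
  htp (cc G (cc E F)) cz -> htp E cz.
Proof.
move=> cF cG cE hFG idem he.
set P := cc F G.
have cP : ischain P by apply: ischain_cc.
have s1 : htp E (cc E (cc P E)).
  have e1 : E = cc E (cc cid E) by rewrite cc1F idem.
  rewrite {1}e1; apply: htp_mid => //; exact: htp_sym.
have s2 : htp (cc E (cc P E)) (cc (cc E (cc P E)) (cc P E)).
  have e2 : cc E (cc P E) = cc (cc E (cc P E)) (cc cid E) by rewrite cc1F -!ccA idem.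
  rewrite {1}e2; apply: htp_mid => //; last exact: htp_sym.
  by apply: ischain_cc => //; apply: ischain_cc.
have s3 : htp (cc (cc E (cc P E)) (cc P E)) cz.
  have e3 : cc (cc E (cc P E)) (cc P E) = cc (cc E F) (cc (cc G (cc E F)) (cc G E)).
    by rewrite /P !ccA.
  rewrite e3; apply: (@htp_trans _ _ _ (cc (cc E F) (cc cz (cc G E)))).
    by apply: htp_mid => //; apply: ischain_cc.
  by rewrite cc0F ccF0; apply: htp_refl.
exact: htp_trans s1 (htp_trans s2 s3).
Qed.

Lemma ulsubmx0 (R : zmodType) m1 m2 n1 n2 : ulsubmx (0 : 'M[R]_(m1 + m2, n1 + n2)) = 0.
Proof. by apply/matrixP => i j; rewrite !mxE. Qed.
Lemma drsubmx0 (R : zmodType) m1 m2 n1 n2 : drsubmx (0 : 'M[R]_(m1 + m2, n1 + n2)) = 0.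
Proof. by apply/matrixP => i j; rewrite !mxE. Qed.

Lemma NH_E1 T U : htp (E1 T U) cz -> NH (@cid T).
Proof.
rewrite /htp csub0 => -[h [e1 e0]]; exists (hul h); split.
  have := congr1 hul e1; rewrite dif_dsum hul_r => <-.
  by apply: hom_eq; rewrite /= ?block_mxKul ?ulsubmx0.
have := congr1 hul e0; rewrite dif_dsum hul_l => <-.
by apply: hom_eq; rewrite /= ?block_mxKul ?ulsubmx0.
Qed.
Lemma NH_E2 T U : htp (csub cid (E1 T U)) cz -> NH (@cid U).
Proof.
rewrite /htp csub0 => -[h [e1 e0]]; exists (hdr h); split.
  have := congr1 hdr e1; rewrite dif_dsum hdr_r => <-.
  by apply: hom_eq; rewrite /= ?subr0 ?drsubmx0 // scalar_mx_block opp_block_mx add_block_mx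
    block_mxKdr oppr0 addr0.
have := congr1 hdr e0; rewrite dif_dsum hdr_l => <-.
by apply: hom_eq; rewrite /= ?subr0 ?drsubmx0 // scalar_mx_block opp_block_mx add_block_mx
    block_mxKdr oppr0 addr0.
Qed.

Lemma hom_tgt0 p q (f g : hom p q 0 0) : f = g.
Proof. by apply: hom_eq; apply/matrixP => -[]. Qed.
Lemma hom_src0 p q (f g : hom 0 0 p q) : f = g.
Proof. by apply: hom_eq; apply/matrixP => i -[]. Qed.
Lemma hc_thru0 p q p' q' (g : hom 0 0 p q) (f : hom p' q' 0 0) : hc g f = hzero.
Proof.
apply: hom_eq; rewrite /= ?AX_thin ?XB_thin ?addr0 //;
  by apply/matrixP => i j; rewrite !mxE big_ord0.
Qed.
Lemma hsub00 p q p' q' (x : hom p q p' q') : hsub hzero (hsub hzero x) = x.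
Proof. by apply: hom_eq; rewrite /= !sub0r opprK. Qed.

Lemma iso0_of_NH T : NH (@cid T) -> iso la ra T (zero_cplx A B X).
Proof.
move=> [h [/= e1 e0]].
exists hzero, hzero, hzero, hzero.
split; first exact: hom_tgt0.
split; first exact: hom_src0.
split. 2:{ exists hzero. simpl. split. all: apply: hom_tgt0. }
exists (hsub hzero h); rewrite hc_subl hc_subr !hc0f !hcf0 -e1 -e0; by split.
Qed.

Lemma NH_of_iso0 T : iso la ra T (zero_cplx A B X) -> NH (@cid T).
Proof.
move=> [f1 [f0 [g1 [g0 [_ [_ [[h [e1 e0]] _]]]]]]].
exists (hsub hzero h); rewrite /= hc_subl hc_subr hc0f hcf0 -e1 -e0 !hc_thru0.
by rewrite !hsub00.
Qed.

Definition local_end (T : cplx) := ~ NH (@cid T) /\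
  forall e : cm T T, ischain e -> htp (cc e e) e -> htp e cz \/ htp e cid.

Lemma indec_of_local T : local_end T -> indec la ra T.
Proof.
move=> [nid loc]; split; first by move/NH_of_iso0.
move=> T1 T2 [f1 [f0 [g1 [g0 [cf [cg [hGF hFG]]]]]]].
pose F : cm T (dsum T1 T2) := (f1, f0).
pose G : cm (dsum T1 T2) T := (g1, g0).
have cF : ischain F := cf.
have cG : ischain G := cg.
have hGF' : htp (cc G F) cid := hGF.
have hFG' : htp (cc F G) cid := hFG.
pose E := E1 T1 T2.
have cE : ischain E := E1_chain T1 T2.
have Eidem : cc E E = E := E1_idem T1 T2.
pose e := cc G (cc E F).
have ce : ischain e by apply: ischain_cc => //; apply: ischain_cc.
have ee : htp (cc e e) e.
  apply: (@htp_trans _ _ _ (cc (cc G E) (cc cid (cc E F)))).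
    have -> : cc e e = cc (cc G E) (cc (cc F G) (cc E F)) by rewrite /e !ccA.
    apply: htp_mid => //; by apply: ischain_cc.
  have -> : cc (cc G E) (cc cid (cc E F)) = e.
    by rewrite cc1F /e ccA -(ccA G E E) Eidem -ccA.
  exact: htp_refl.
case: (loc e ce ee) => he.
  left; apply: iso0_of_NH; apply: (@NH_E1 T1 T2).
  exact: (key_idem cF cG cE hFG' Eidem he).
right; apply: iso0_of_NH; apply: (@NH_E2 T1 T2).
apply: (key_idem cF cG _ hFG').
- by apply: ischain_sub => //; apply: ischain_id.
- by rewrite cc_subl !cc_subr !cc1F ccF1 Eidem csubxx csub0.
- rewrite cc_subl cc_subr cc1F -(csubxx (@cid T)).
  exact: htp_sub.
Qed.
End Alg.

Section Loc.
Variables (k : fieldType) (R : falgType k).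

Lemma falg_unit_l (x y : R) : y * x = 1 -> x \is a GRing.unit.
Proof.
move=> yx.
have inj : lker (amull x) == 0%VS.
  apply/lker0P => v w; rewrite !lfunE /= => e.
  by rewrite -[v]mul1r -[w]mul1r -yx -!mulrA e.
pose z := (amull x)^-1%VF 1.
have xz : x * z = 1 by have := lker0_lfunVK inj 1; rewrite lfunE.
have yz : y = z by rewrite -[y]mulr1 -xz mulrA yx mul1r.
by apply/unitrP; exists y; rewrite yz; split; rewrite // -yz.
Qed.
Lemma falg_unit_r (x y : R) : x * y = 1 -> x \is a GRing.unit.
Proof.
move=> xy; have uy : y \is a GRing.unit by apply: (falg_unit_l xy).
have -> : x = y^-1 by rewrite -[x]mulr1 -(divrr uy) mulrA xy mul1r.
by rewrite unitrV.
Qed.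

Hypothesis loc : local_alg R.

Lemma nu_mull (a b : R) : a \isn't a GRing.unit -> b * a \isn't a GRing.unit.
Proof.
move=> na; apply: contra na => u; apply: (@falg_unit_l _ ((b * a)^-1 * b)).
by rewrite -mulrA mulVr.
Qed.
Lemma nu_mulr (a b : R) : a \isn't a GRing.unit -> a * b \isn't a GRing.unit.
Proof.
move=> na; apply: contra na => u; apply: (@falg_unit_r _ (b * (a * b)^-1)).
by rewrite mulrA divrr.
Qed.
Lemma nu_add (a b : R) : a \isn't a GRing.unit -> b \isn't a GRing.unit -> a + b \isn't a GRing.unit.
Proof. exact: loc. Qed.
Lemma nu_1sub (a : R) : a \isn't a GRing.unit -> (1 - a) \is a GRing.unit.
Proof.
move=> na; apply/negPn/negP => nb; have := nu_add na nb.
by rewrite addrC subrK unitr1.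
Qed.
Lemma idem01 (a : R) : a * a = a -> a = 0 \/ a = 1.
Proof.
move=> aa; case: (boolP (a \is a GRing.unit)) => ua.
  right; apply: (mulrI ua); by rewrite aa mulr1.
left; have u := nu_1sub ua.
apply: (mulrI u); by rewrite mulrBl mul1r aa subrr mulr0.
Qed.

Lemma row_nil n (c : 'I_n -> 'I_n -> R) (x : 'I_n -> R) :
  (forall i j, c i j \isn't a GRing.unit) ->
  (forall j, x j = \sum_k x k * c k j) -> forall j, x j = 0.
Proof.
elim: n c x => [|n IH] c x nc ex j; first by case: j.
set u := (1 - c ord0 ord0)^-1.
have uu : (1 - c ord0 ord0) \is a GRing.unit by apply: nu_1sub.
have x0 : x ord0 = \sum_(k < n) x (lift ord0 k) * (c (lift ord0 k) ord0 * u).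
  have := ex ord0; rewrite big_ord_recl => e.
  have e' : x ord0 * (1 - c ord0 ord0) = \sum_(k < n) x (lift ord0 k) * c (lift ord0 k) ord0.
    by rewrite mulrBr mulr1 {1}e addrAC subrr add0r.
  rewrite -[x ord0]mulr1 -(divrr uu) mulrA e' mulr_suml.
  by apply: eq_bigr => i _; rewrite mulrA.
pose c' i j := c (lift ord0 i) ord0 * u * c ord0 (lift ord0 j) + c (lift ord0 i) (lift ord0 j).
have nc' : forall i j, c' i j \isn't a GRing.unit.
  by move=> a b; apply: nu_add; [apply: nu_mull | apply: nc].
have ex' : forall j0, x (lift ord0 j0) = \sum_k x (lift ord0 k) * c' k j0.
  move=> j'; rewrite ex big_ord_recl x0 mulr_suml -big_split /=.
  by apply: eq_bigr => i _; rewrite /c' mulrDr !mulrA.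
have z := IH c' (fun i => x (lift ord0 i)) nc' ex'.
case: (unliftP ord0 j) => [j' ->|->]; first exact: z.
by rewrite x0 big1 // => i _; rewrite z mul0r.
Qed.

Lemma col_nil n (c : 'I_n -> 'I_n -> R) (y : 'I_n -> R) :
  (forall i j, c i j \isn't a GRing.unit) ->
  (forall i, y i = \sum_k c i k * y k) -> forall j, y j = 0.
Proof.
elim: n c y => [|n IH] c y nc ey j; first by case: j.
set u := (1 - c ord0 ord0)^-1.
have uu : (1 - c ord0 ord0) \is a GRing.unit by apply: nu_1sub.
have y0 : y ord0 = \sum_(k < n) (u * c ord0 (lift ord0 k)) * y (lift ord0 k).
  have := ey ord0; rewrite big_ord_recl => e.
  have e' : (1 - c ord0 ord0) * y ord0 = \sum_(k < n) c ord0 (lift ord0 k) * y (lift ord0 k).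
    by rewrite mulrBl mul1r {1}e addrAC subrr add0r.
  rewrite -[y ord0]mul1r -(mulVr uu) -mulrA e' mulr_sumr.
  by apply: eq_bigr => i _; rewrite mulrA.
pose c' i j := c (lift ord0 i) ord0 * u * c ord0 (lift ord0 j) + c (lift ord0 i) (lift ord0 j).
have nc' : forall i j, c' i j \isn't a GRing.unit.
  by move=> a b; apply: nu_add; [apply: nu_mull | apply: nc].
have ey' : forall i0, y (lift ord0 i0) = \sum_k c' i0 k * y (lift ord0 k).
  move=> i'; rewrite ey big_ord_recl y0 mulr_sumr -big_split /=.
  by apply: eq_bigr => i _; rewrite /c' mulrDl !mulrA.
have z := IH c' (fun i => y (lift ord0 i)) nc' ey'.
case: (unliftP ord0 j) => [j' ->|->]; first exact: z.
by rewrite y0 big1 // => i _; rewrite z mulr0.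
Qed.

Lemma idem_nil n (c : 'M[R]_n) :
  (forall i j, c i j \isn't a GRing.unit) -> c *m c = c -> c = 0.
Proof.
move=> nc cc; apply/matrixP => i j; rewrite mxE.
apply: (@row_nil n (fun a b => c a b) (fun b => c i b) nc) => j'.
by rewrite -{1}cc mxE.
Qed.
End Loc.

Section Key.
Variables (k : fieldType) (A B : falgType k) (X : vectType k).
Variables (la : A -> X -> X) (ra : X -> B -> X).
Hypothesis Hb : bimodule la ra.
Hypothesis locA : local_alg A.
Hypothesis locB : local_alg B.

Lemma KR r (g : 'M[X]_(1, r)) : gens_right ra g ->
  (forall n (g' : 'M[X]_(1, n)), gens_right ra g' -> (r <= n)%N) ->
  forall c : 'M[B]_r, c *m c = c -> mxXB ra g c = 0 -> c = 0.
Proof.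
case: r g => [|r'] g gg gmin c cc gc; first by apply/matrixP => -[].
apply: (idem_nil locB _ cc) => i j; apply/negP => ucij.
have e : \sum_(l < r'.+1) ra (g 0 l) (c l j) = 0.
  by move/matrixP: gc => /(_ 0 j); rewrite !mxE.
rewrite (bigD1_ord i) //= in e.
move/eqP: e; rewrite addr_eq0 => /eqP e.
have gi : g 0 i = - \sum_(l < r') ra (g 0 (lift i l)) (c (lift i l) j * (c i j)^-1).
  rewrite -[g 0 i](ra1 Hb) -(divrr ucij) (raM Hb) e (raNl Hb) (ra_suml Hb); congr (- _).
  by apply: eq_bigr => l _; rewrite (raM Hb).
have : gens_right ra (col' i g).
  move=> x; have [b ->] := gg x.
  exists (fun l => b (lift i l) - c (lift i l) j * (c i j)^-1 * b i).
  rewrite (bigD1_ord i) //= gi (raNl Hb) (ra_suml Hb).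
  under [RHS]eq_bigr do rewrite mxE (raDr Hb) (raNr Hb).
  rewrite big_split /= sumrN addrC; congr (_ - _).
  by apply: eq_bigr => l _; rewrite -(raM Hb).
by move/gmin; rewrite ltnn.
Qed.

Lemma KL l (h : 'M[X]_(l, 1)) : gens_left la h ->
  (forall n (h' : 'M[X]_(n, 1)), gens_left la h' -> (l <= n)%N) ->
  forall c : 'M[A]_l, c *m c = c -> mxAX la c h = 0 -> c = 0.
Proof.
case: l h => [|l'] h gh hmin c cc hc; first by apply/matrixP => -[].
have nc : forall i j, c i j \isn't a GRing.unit.
  move=> i j; apply/negP => ucij.
  have e : \sum_(t < l'.+1) la (c i t) (h t 0) = 0.
    by move/matrixP: hc => /(_ i 0); rewrite !mxE.
  rewrite (bigD1_ord j) //= in e.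
  move/eqP: e; rewrite addr_eq0 => /eqP e.
  have hj : h j 0 = - \sum_(t < l') la ((c i j)^-1 * c i (lift j t)) (h (lift j t) 0).
    rewrite -[h j 0](la1 Hb) -(mulVr ucij) (laM Hb) e (laNr Hb) (la_sumr Hb); congr (- _).
    by apply: eq_bigr => t _; rewrite (laM Hb).
  have : gens_left la (row' j h).
    move=> x; have [a ->] := gh x.
    exists (fun t => a (lift j t) - a j * ((c i j)^-1 * c i (lift j t))).
    rewrite (bigD1_ord j) //= hj (laNr Hb) (la_sumr Hb).
    under [RHS]eq_bigr do rewrite mxE (laDl Hb) (laNl Hb).
    rewrite big_split /= sumrN addrC; congr (_ - _).
    by apply: eq_bigr => t _; rewrite -(laM Hb).
  by move/hmin; rewrite ltnn.
apply/matrixP => i j; rewrite mxE.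
apply: (@col_nil _ _ locA l'.+1 (fun a b => c a b) (fun a => c a j) nc) => i'.
by rewrite -{1}cc mxE.
Qed.
End Key.

Lemma mx1_idem (k : fieldType) (R : falgType k) : local_alg R ->
  forall M : 'M[R]_1, M *m M = M -> M = 0 \/ M = 1%:M.
Proof.
move=> loc M MM.
have e : M 0 0 * M 0 0 = M 0 0.
  by move/matrixP: MM => /(_ 0 0); rewrite mxE big_ord1.
case: (idem01 loc e) => e'; [left|right]; apply/matrixP => i j;
  by rewrite !ord1 !mxE e'.
Qed.

Section Spec.
Variables (k : fieldType) (A B : falgType k) (X : vectType k).
Variables (la : A -> X -> X) (ra : X -> B -> X).
Hypothesis Hb : bimodule la ra.
Hypothesis locA : local_alg A.
Hypothesis locB : local_alg B.

Notation hc := (hcomp la ra).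
Notation cplx := (Defs.cplx A B X).
Notation hzero := (@hzero _ A B X _ _ _ _).

Definition trivH (T : cplx) := forall h : Defs.hom A B X (m1 T) (m2 T) (n1 T) (n2 T),
  hc h (dif T) = hzero /\ hc (dif T) h = hzero.

Lemma csub_eq0 (T U : cplx) (F G : cm T U) : csub F G = cz _ _ -> F = G.
Proof.
have s0 : forall (V : zmodType) (x y : V), x - y = 0 -> x = y.
  by move=> V x y /eqP; rewrite subr_eq0 => /eqP.
case: F G => [F1 F2] [G1 G2]; rewrite /csub /= => -[] e1 e2 e3 e4 e5 e6.
by rewrite (hom_eq (s0 _ _ _ e1) (s0 _ _ _ e2) (s0 _ _ _ e3)) (hom_eq (s0 _ _ _ e4) (s0 _ _ _ e5) (s0 _ _ _ e6)).
Qed.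

Lemma local_triv (T : cplx) : trivH T -> cid T <> cz _ _ ->
  (forall e : cm T T, ischain la ra e -> cc la ra e e = e -> e = cz _ _ \/ e = cid _) ->
  local_end la ra T.
Proof.
move=> tH ncid H; split.
  move=> [h [e1 e0]]; apply: ncid; rewrite /cid /cz /=.
  by move: e1 e0; rewrite /= !(proj1 (tH h)) !(proj2 (tH h)) => -> ->.
move=> e ce [h [e1 e0]].
have ee : cc la ra e e = e.
  apply: csub_eq0; move: e1 e0; rewrite (proj1 (tH h)) (proj2 (tH h)) => e1 e0.
  by rewrite (surjective_pairing (csub _ _)) e1 e0.
case: (H e ce ee) => ->; [left | right]; rewrite /htp csubxx; exact: NH0.
Qed.

Lemma pair_eq (S T : Type) (x1 y1 : S) (x2 y2 : T) : x1 = y1 -> x2 = y2 -> (x1, x2) = (y1, y2).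
Proof. by move=> -> ->. Qed.

Ltac mx0 := apply/matrixP; first [by move=> -[] | by move=> ? -[] | by move=> ? ?; rewrite !mxE big_ord0
  | by move=> ? ?; rewrite !mxE !big_ord0 ?addr0].

Lemma local_P1sh : local_end la ra (P1sh A B X).
Proof.
apply: local_triv.
- by move=> h; split; apply: hom_eq; mx0.
- move=> /(congr1 (fun F => hA F.1)) /= /matrixP /(_ 0 0); rewrite !mxE /=.
  by apply/eqP; apply: oner_neq0.
- move=> [e1 e2] ce /= ee.
  have : hA e1 *m hA e1 = hA e1 by move: (congr1 (fun F => hA F.1) ee).
  case/(mx1_idem locA) => ea; [left|right]; (apply: pair_eq; last exact: hom_tgt0);
    by apply: hom_eq => //; mx0.
Qed.
Lemma local_P2sh : local_end la ra (P2sh A B X).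
Proof.
apply: local_triv.
- by move=> h; split; apply: hom_eq; mx0.
- move=> /(congr1 (fun F => hB F.1)) /= /matrixP /(_ 0 0); rewrite !mxE /=.
  by apply/eqP; apply: oner_neq0.
- move=> [e1 e2] ce /= ee.
  have : hB e1 *m hB e1 = hB e1 by move: (congr1 (fun F => hB F.1) ee).
  case/(mx1_idem locB) => ea; [left|right]; (apply: pair_eq; last exact: hom_tgt0);
    by apply: hom_eq => //; mx0.
Qed.
Lemma local_P1c : local_end la ra (P1c A B X).
Proof.
apply: local_triv.
- by move=> h; split; apply: hom_eq; mx0.
- move=> /(congr1 (fun F => hA F.2)) /= /matrixP /(_ 0 0); rewrite !mxE /=.
  by apply/eqP; apply: oner_neq0.
- move=> [e1 e2] ce /= ee.
  have : hA e2 *m hA e2 = hA e2 by move: (congr1 (fun F => hA F.2) ee).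
  case/(mx1_idem locA) => ea; [left|right]; (apply: pair_eq; first exact: hom_tgt0);
    by apply: hom_eq => //; mx0.
Qed.
Lemma local_P2c : local_end la ra (P2c A B X).
Proof.
apply: local_triv.
- by move=> h; split; apply: hom_eq; mx0.
- move=> /(congr1 (fun F => hB F.2)) /= /matrixP /(_ 0 0); rewrite !mxE /=.
  by apply/eqP; apply: oner_neq0.
- move=> [e1 e2] ce /= ee.
  have : hB e2 *m hB e2 = hB e2 by move: (congr1 (fun F => hB F.2) ee).
  case/(mx1_idem locB) => ea; [left|right]; (apply: pair_eq; first exact: hom_tgt0);
    by apply: hom_eq => //; mx0.
Qed.

Lemma idem_1sub n (R : ringType) (b : 'M[R]_n) : b *m b = b -> (1%:M - b) *m (1%:M - b) = 1%:M - b.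
Proof. by move=> bb; rewrite mulmxBl mul1mx mulmxBr mulmx1 bb subrr subr0. Qed.

Lemma local_Pg r (g : 'M[X]_(1, r)) : gens_right ra g ->
  (forall n (g' : 'M[X]_(1, n)), gens_right ra g' -> (r <= n)%N) ->
  local_end la ra (Px A B g).
Proof.
move=> gg gmin; apply: local_triv.
- by move=> h; split; apply: hom_eq; mx0.
- move=> /(congr1 (fun F => hA F.2)) /= /matrixP /(_ 0 0); rewrite !mxE /=.
  by apply/eqP; apply: oner_neq0.
- move=> [e1 e2] ce /= ee.
  have ea : hA e2 *m hA e2 = hA e2 by move: (congr1 (fun F => hA F.2) ee).
  have eb : hB e1 *m hB e1 = hB e1 by move: (congr1 (fun F => hB F.1) ee).
  have cX : mxXB ra g (hB e1) = mxAX la (hA e2) g.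
    by move: (congr1 (@hX _ _ _ _ _ _ _ _) ce); rewrite /= AX_thin XB_thin add0r addr0.
  case/(mx1_idem locA): ea => ea; rewrite ea in cX.
    rewrite (AX0l Hb) in cX; have b0 := KR Hb locB gg gmin eb cX.
    by left; apply: pair_eq; apply: hom_eq => //; mx0.
  rewrite (AX1 Hb) in cX.
  have : mxXB ra g (1%:M - hB e1) = 0 by rewrite (XB_subr Hb) (XB1 Hb) cX subrr.
  move/(KR Hb locB gg gmin (idem_1sub eb)) => /eqP; rewrite subr_eq0 => /eqP b1.
  by right; apply: pair_eq; apply: hom_eq => //; mx0.
Qed.

Lemma local_Ph l (h : 'M[X]_(l, 1)) : gens_left la h ->
  (forall n (h' : 'M[X]_(n, 1)), gens_left la h' -> (l <= n)%N) ->
  local_end la ra (Px A B h).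
Proof.
move=> gh hmin; apply: local_triv.
- by move=> h'; split; apply: hom_eq; mx0.
- move=> /(congr1 (fun F => hB F.1)) /= /matrixP /(_ 0 0); rewrite !mxE /=.
  by apply/eqP; apply: oner_neq0.
- move=> [e1 e2] ce /= ee.
  have ea : hA e2 *m hA e2 = hA e2 by move: (congr1 (fun F => hA F.2) ee).
  have eb : hB e1 *m hB e1 = hB e1 by move: (congr1 (fun F => hB F.1) ee).
  have cX : mxXB ra h (hB e1) = mxAX la (hA e2) h.
    by move: (congr1 (@hX _ _ _ _ _ _ _ _) ce); rewrite /= AX_thin XB_thin add0r addr0.
  case/(mx1_idem locB): eb => eb; rewrite eb in cX.
    rewrite (XB0r Hb) in cX; have a0 := KL Hb locA gh hmin ea (esym cX).
    by left; apply: pair_eq; apply: hom_eq => //; mx0.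
  rewrite (XB1 Hb) in cX.
  have : mxAX la (1%:M - hA e2) h = 0 by rewrite (AX_subl Hb) (AX1 Hb) -cX subrr.
  move/(KL Hb locA gh hmin (idem_1sub ea)) => /eqP; rewrite subr_eq0 => /eqP a1.
  by right; apply: pair_eq; apply: hom_eq => //; mx0.
Qed.
End Spec.

Lemma no_null_id (R : nzRingType) p q s (a : 'M[R]_(p, q)) (b : 'M_(q, p))
  (c : 'M_(p, s)) (d : 'M_(s, p)) : q = 0%N -> s = 0%N -> (0 < p)%N ->
  a *m b - 1%:M <> c *m d.
Proof.
move=> q0 s0 p0 /matrixP /(_ (Ordinal p0) (Ordinal p0)); rewrite !mxE eqxx /=.
rewrite !big1 ?sub0r => [/eqP|l _|l _].
- by rewrite oppr_eq0 oner_eq0.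
- by exfalso; have := ltn_ord l; rewrite {2}s0.
- by exfalso; have := ltn_ord l; rewrite {2}q0.
Qed.

Section Fin.
Variables (k : fieldType) (A B : falgType k) (X : vectType k).
Variables (la : A -> X -> X) (ra : X -> B -> X).
Hypothesis Hb : bimodule la ra.
Notation cplx := (Defs.cplx A B X).

Lemma noiso_A (T U : cplx) : n1 T = 0%N -> m1 U = 0%N -> (0 < m1 T)%N ->
  ~ iso la ra T U /\ ~ iso la ra U T.
Proof.
move=> e1 e2 e3; split.
  move=> [f1 [f0 [g1 [g0 [_ [_ [[h [_ e]] _]]]]]]].
  by move: (congr1 (@hA _ _ _ _ _ _ _ _) e) => /=; apply: no_null_id.
move=> [f1 [f0 [g1 [g0 [_ [_ [_ [h [_ e]]]]]]]]].
by move: (congr1 (@hA _ _ _ _ _ _ _ _) e) => /=; apply: no_null_id.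
Qed.
Lemma noiso_B (T U : cplx) : m2 T = 0%N -> n2 U = 0%N -> (0 < n2 T)%N ->
  ~ iso la ra T U /\ ~ iso la ra U T.
Proof.
move=> e1 e2 e3; split.
  move=> [f1 [f0 [g1 [g0 [_ [_ [[h [e _]] _]]]]]]].
  by move: (congr1 (@hB _ _ _ _ _ _ _ _) e) => /=; apply: no_null_id.
move=> [f1 [f0 [g1 [g0 [_ [_ [_ [h [e _]]]]]]]]].
by move: (congr1 (@hB _ _ _ _ _ _ _ _) e) => /=; apply: no_null_id.
Qed.

Notation AX := (mxAX la).
Notation XB := (mxXB ra).
Definition RGok m n (D : 'M[X]_(m, n)) := forall p (Y : 'M[X]_(m, p)), exists b, Y = XB D b.
Definition LGok m n (D : 'M[X]_(m, n)) := forall p (Y : 'M[X]_(p, n)), exists a, Y = AX a D.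

Lemma flat_eq (R : Type) n (M N : 'M[R]_(0, n)) : M = N.
Proof. by apply/matrixP => -[]. Qed.
Lemma thin_eq (R : Type) n (M N : 'M[R]_(n, 0)) : M = N.
Proof. by apply/matrixP => ? -[]. Qed.

Lemma RG_g r (g : 'M[X]_(1, r)) : gens_right ra g -> RGok g.
Proof.
move=> gg p Y.
have [c Hc] := @fin_all_exists _ (fun _ => 'I_r -> B)
  (fun j c => Y ord0 j = \sum_(i < r) ra (g ord0 i) (c i)) (fun j => gg (Y ord0 j)).
exists (\matrix_(i, j) c j i); apply/matrixP => i j; rewrite ord1 mxE Hc.
by apply: eq_bigr => l _; rewrite mxE.
Qed.
Lemma LG_h l (h : 'M[X]_(l, 1)) : gens_left la h -> LGok h.
Proof.
move=> gh p Y.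
have [c Hc] := @fin_all_exists _ (fun _ => 'I_l -> A)
  (fun i c => Y i ord0 = \sum_(t < l) la (c t) (h t ord0)) (fun i => gh (Y i ord0)).
exists (\matrix_(i, j) c i j); apply/matrixP => i j; rewrite ord1 mxE Hc.
by apply: eq_bigr => t _; rewrite mxE.
Qed.

Ltac blk2 := rewrite ?block_mxEul ?block_mxEur ?block_mxEdl ?block_mxEdr ?col_mxEu ?col_mxEd
  ?row_mxEl ?row_mxEr.
Lemma XB_bcol m1 m2 n1 n2 p (a1 : 'M[X]_(m1, n1)) (a2 : 'M[X]_(m1, n2))
  (a3 : 'M[X]_(m2, n1)) (a4 : 'M[X]_(m2, n2)) (y1 : 'M[B]_(n1, p)) (y2 : 'M[B]_(n2, p)) :
  XB (block_mx a1 a2 a3 a4) (col_mx y1 y2) = col_mx (XB a1 y1 + XB a2 y2) (XB a3 y1 + XB a4 y2).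
Proof.
apply/matrixP => i j; rewrite -(splitK i); case: (split i) => i'.
all: rewrite [LHS]mxE big_split_ord /=; under eq_bigr do blk2; under [X in _ + X]eq_bigr do blk2.
all: by blk2; rewrite !mxE.
Qed.
Lemma AX_rowb m n1 n2 p1 p2 (a1 : 'M[A]_(m, n1)) (a2 : 'M[A]_(m, n2))
  (y1 : 'M[X]_(n1, p1)) (y2 : 'M[X]_(n1, p2)) (y3 : 'M[X]_(n2, p1)) (y4 : 'M[X]_(n2, p2)) :
  AX (row_mx a1 a2) (block_mx y1 y2 y3 y4) = row_mx (AX a1 y1 + AX a2 y3) (AX a1 y2 + AX a2 y4).
Proof.
apply/matrixP => i j; rewrite -(splitK j); case: (split j) => j'.
all: rewrite [LHS]mxE big_split_ord /=; under eq_bigr do blk2; under [X in _ + X]eq_bigr do blk2.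
all: by blk2; rewrite !mxE.
Qed.

Lemma RG_blk1 m1 n1 n2 (D1 : 'M[X]_(m1, n1)) (D2 : 'M[X]_(0, n2)) :
  RGok D1 -> RGok (block_mx D1 0 0 D2).
Proof.
move=> H p Y; rewrite -[Y]vsubmxK.
have [b1 e1] := H _ (usubmx Y).
exists (col_mx b1 0); rewrite XB_bcol !(XB0l Hb) !(XB0r Hb) !addr0 -e1.
by congr col_mx; apply: flat_eq.
Qed.
Lemma RG_blk2 n1 m2 n2 (D1 : 'M[X]_(0, n1)) (D2 : 'M[X]_(m2, n2)) :
  RGok D2 -> RGok (block_mx D1 0 0 D2).
Proof.
move=> H p Y; rewrite -[Y]vsubmxK.
have [b2 e2] := H _ (dsubmx Y).
exists (col_mx 0 b2); rewrite XB_bcol !(XB0l Hb) !(XB0r Hb) !add0r -e2.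
by congr col_mx; apply: flat_eq.
Qed.
Lemma LG_blk1 m1 n1 m2 (D1 : 'M[X]_(m1, n1)) (D2 : 'M[X]_(m2, 0)) :
  LGok D1 -> LGok (block_mx D1 0 0 D2).
Proof.
move=> H p Y; rewrite -[Y]hsubmxK.
have [a1 e1] := H _ (lsubmx Y).
exists (row_mx a1 0); rewrite AX_rowb !(AX0l Hb) !(AX0r Hb) !addr0 -e1.
by congr row_mx; apply: thin_eq.
Qed.
Lemma LG_blk2 m1 m2 n2 (D1 : 'M[X]_(m1, 0)) (D2 : 'M[X]_(m2, n2)) :
  LGok D2 -> LGok (block_mx D1 0 0 D2).
Proof.
move=> H p Y; rewrite -[Y]hsubmxK.
have [a2 e2] := H _ (rsubmx Y).
exists (row_mx 0 a2); rewrite AX_rowb !(AX0l Hb) !(AX0r Hb) !add0r -e2.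
by congr row_mx; apply: thin_eq.
Qed.

Lemma presilt_gen (T : cplx) : n1 T = 0%N -> m2 T = 0%N ->
  (forall Y : 'M[X]_(m1 T, n2 T), exists a b, Y = AX a (hX (dif T)) + XB (hX (dif T)) b) ->
  presilting la ra T.
Proof.
move=> e1 e2 H phi; have [a [b eY]] := H (hX phi).
exists (Defs.Hom a 0 0), (Defs.Hom 0 0 b); apply: hom_eq => /=.
- apply/matrixP => i j; exfalso; have := ltn_ord j; by rewrite {2}e1.
- by rewrite eY (XB0l Hb) (AX0r Hb) addr0 add0r.
- apply/matrixP => i j; exfalso; have := ltn_ord i; by rewrite {2}e2.
Qed.
Lemma presilt_R (T : cplx) : n1 T = 0%N -> m2 T = 0%N -> RGok (hX (dif T)) -> presilting la ra T.
Proof.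
move=> e1 e2 H; apply: presilt_gen => // Y; have [b ->] := H _ Y.
by exists 0, b; rewrite (AX0l Hb) add0r.
Qed.
Lemma presilt_L (T : cplx) : n1 T = 0%N -> m2 T = 0%N -> LGok (hX (dif T)) -> presilting la ra T.
Proof.
move=> e1 e2 H; apply: presilt_gen => // Y; have [a ->] := H _ Y.
by exists a, 0; rewrite (XB0r Hb) addr0.
Qed.
End Fin.

Unset Implicit Arguments. Set Strict Implicit.

Theorem proposition3p10 (R : realType) (k : fieldType) (A B : falgType k)
  (X : vectType k) (la : A -> X -> X) (ra : X -> B -> X) :
  local_alg A -> local_alg B -> bimodule la ra ->
  (* (a) *)
  (forall r : nat, is_tB ra r ->
     gfan_contains la ra (cone [:: (0 : R, -1); (1, - r%:R)])) /\
  (* (b) *)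
  (forall l : nat, is_tA la l ->
     gfan_contains la ra (cone [:: (1 : R, 0); (l%:R, -1)])) /\
  (* (c) *)
  (forall (r : nat) (g : 'M[X]_(1, r)), is_tB ra r -> gens_right ra g ->
     mu_plus la ra 1 (P1sh A B X) (P2sh A B X) (Px A B g) (P2sh A B X)) /\
  (* (d) *)
  (forall (l : nat) (h : 'M[X]_(l, 1)), is_tA la l -> gens_left la h ->
     mu_minus la ra 2 (P1c A B X) (P2c A B X) (P1c A B X) (Px A B h)).
Proof.
move=> locA locB Hb.
split.
  move=> r [[g gg] gmin].
  exists [:: P2sh A B X; Px A B g].
  have [ni1 ni2] := @noiso_A _ _ _ _ la ra (Px A B g) (P2sh A B X) erefl erefl erefl.
  split.
    case=> -[|[|i]] Hi //=; apply: (indec_of_local Hb).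
      exact: local_P2sh.
    exact: local_Pg.
  split.
    by case=> -[|[|i]] Hi //; case=> -[|[|j]] Hj.
  split.
    apply: (presilt_R Hb) => //=.
    apply: (RG_blk2 Hb); apply: (RG_blk1 Hb); exact: RG_g.
  have -> : map (gvec R) [:: P2sh A B X; Px A B g] = [:: (0 : R, -1); (1, - r%:R)].
    by rewrite /= /gvec /= !mulr0n !mulr1n !subr0 !sub0r.
  by [].
split.
  move=> l [[h gh] hmin].
  exists [:: P1c A B X; Px A B h].
  have [ni1 ni2] := @noiso_B _ _ _ _ la ra (Px A B h) (P1c A B X) erefl erefl erefl.
  split.
    case=> -[|[|i]] Hi //=; apply: (indec_of_local Hb).
      exact: local_P1c.
    exact: local_Ph.
  split.
    by case=> -[|[|i]] Hi //; case=> -[|[|j]] Hj.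
  split.
    apply: (presilt_L Hb) => //=.
    apply: (LG_blk2 Hb); apply: (LG_blk1 Hb); exact: LG_h.
  have -> : map (gvec R) [:: P1c A B X; Px A B h] = [:: (1 : R, 0); (l%:R, -1)].
    by rewrite /= /gvec /= !mulr0n !mulr1n !subr0 !sub0r.
  by [].
split.
  move=> r g [_ gmin] gg.
  have [ni1 ni2] := @noiso_A _ _ _ _ la ra (Px A B g) (P2sh A B X) erefl erefl erefl.
  have [ni3 _] := @noiso_A _ _ _ _ la ra (Px A B g) (P1sh A B X) erefl erefl erefl.
  split.
    split; last by split.
    split.
    - apply: (indec_of_local Hb); exact: local_Pg.
    - apply: (indec_of_local Hb); exact: local_P2sh.
    - exact: ni1.
    - apply: (presilt_R Hb) => //=.
      apply: (RG_blk1 Hb); exact: RG_g.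
  split.
    by move=> phi; exists (hzero _ _ _ _ _ _ _), (hzero _ _ _ _ _ _ _); apply: hom_tgt0.
  by have [] := @noiso_A _ _ _ _ la ra (dsum (Px A B g) (P2sh A B X))
    (dsum (P1sh A B X) (P2sh A B X)) erefl erefl erefl.
move=> l h [_ hmin] gh.
have [ni1 ni2] := @noiso_B _ _ _ _ la ra (Px A B h) (P1c A B X) erefl erefl erefl.
have [ni3 _] := @noiso_B _ _ _ _ la ra (Px A B h) (P2c A B X) erefl erefl erefl.
split.
  split; last by split.
  split.
  - apply: (indec_of_local Hb); exact: local_P1c.
  - apply: (indec_of_local Hb); exact: local_Ph.
  - exact: ni2.
  - apply: (presilt_L Hb) => //=.
    apply: (LG_blk2 Hb); exact: LG_h.
split.
  by move=> phi; exists (hzero _ _ _ _ _ _ _), (hzero _ _ _ _ _ _ _); apply: hom_src0.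
by have [] := @noiso_B _ _ _ _ la ra (dsum (P1c A B X) (Px A B h))
  (dsum (P1c A B X) (P2c A B X)) erefl erefl erefl.
Qed.
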